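(* Let $k$ be a positive integer and $n\ge3$. Then $O_{R,k}(C_n)=\mathcal{N}$ if $n=3$ (for all $k\ge1$); $O_{R,k}(C_n)=\mathcal{M}$ if $n\ge4$ is even (for all $k\ge1$); and $O_{R,k}(C_n)=\mathcal{M}$ if $n\ge5$ is odd and $k\ge2$.
   Context: $C_n$ is the cycle on $n$ vertices. $d$ is the shortest-path distance and $d_k(x,y)=\min\{d(x,y),k+1\}$. A set $S$ is a distance-$k$ resolving set if for all distinct $x,y$ some $z\in S$ has $d_k(x,z)\ne d_k(y,z)$. In the Maker-Breaker distance-$k$ resolving game, Maker and Breaker alternately select a not-yet-chosen vertex; Maker wins if his selected vertices form a distance-$k$ resolving set, Breaker wins otherwise. $O_{R,k}(G)=\mathcal{M}$ if Maker has a winning strategy whether he moves first or second, $\mathcal{B}$ if Breaker has a winning strategy whether she moves first or second, and $\mathcal{N}$ if the first player has a winning strategy. *)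

(* Defs.v *)
From mathcomp Require Import all_boot.
Set Implicit Arguments. Unset Strict Implicit. Unset Printing Implicit Defensive.

Section Graphs.
Variable T : finType.

Fixpoint ball (e : rel T) (m : nat) (x : T) : {set T} :=
  match m with
  | 0 => [set x]
  | m'.+1 => let B := ball e m' x in B :|: [set y | [exists z in B, e z y]]
  end.

(* Shortest-path distance: least m such that y lies within distance m of x.
   (Only used on connected graphs, where d(x,y) < #|T|.) *)
Definition gdist (e : rel T) (x y : T) : nat :=
  find (fun m => y \in ball e m x) (iota 0 #|T|).

Definition dist_k (e : rel T) (k : nat) (x y : T) : nat := minn (gdist e x y) k.+1.

Definition resolving_k (e : rel T) (k : nat) (S : {set T}) : bool :=
  [forall x, forall y, (x != y) ==>
     [exists z in S, dist_k e k x z != dist_k e k y z]].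

(* Maker-Breaker game on board T with Maker's winning predicate W on his final
   set.  [maker_wins W fuel mturn M B] : Maker (holding M, Breaker holding B)
   has a winning strategy when it is Maker's turn iff mturn. *)
Fixpoint maker_wins (W : {set T} -> bool) (fuel : nat) (mturn : bool)
    (M B : {set T}) : bool :=
  match fuel with
  | 0 => W M
  | f.+1 =>
    let F := ~: (M :|: B) in
    if F == set0 then W M else
    if mturn then [exists x in F, maker_wins W f false (x |: M) B]
    else [forall x in F, maker_wins W f true M (x |: B)]
  end.

Definition maker_wins_first (W : {set T} -> bool) : bool :=
  maker_wins W #|T| true set0 set0.
Definition maker_wins_second (W : {set T} -> bool) : bool :=
  maker_wins W #|T| false set0 set0.

End Graphs.

(* Outcomes: M (Maker wins both as first and second player), B (Breaker wins
   both), N (first player wins), P (second player wins; excluded in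
   Maker-Breaker games, listed only to make the classification total). *)
Inductive outcome := Out_M | Out_B | Out_N | Out_P.

(* Breaker has a winning strategy exactly when Maker has none (finite game). *)
Definition game_outcome (T : finType) (W : {set T} -> bool) : outcome :=
  match maker_wins_first W, maker_wins_second W with
  | true, true => Out_M
  | false, false => Out_B
  | true, false => Out_N
  | false, true => Out_P
  end.

Definition O_Rk (T : finType) (e : rel T) (k : nat) : outcome :=
  game_outcome (resolving_k e k).

Definition cycle_rel (n : nat) : rel 'I_n :=
  fun i j => (i.+1 %% n == j) || (j.+1 %% n == i).

(* Main.v *)
Require Import Defs.
From mathcomp Require Import zify.
From mathcomp Require Import all_boot.
Set Implicit Arguments. Unset Strict Implicit. Unset Printing Implicit Defensive.

Section Game.
Variable T : finType.
Variable W : {set T} -> bool.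
Variable P : pred T.
Variable p : T -> T.
Hypothesis Pp : forall x, P x -> [/\ P (p x), p (p x) = x & p x != x].

Definition Fr (M B : {set T}) := ~: (M :|: B).
Definition Inv (M B : {set T}) := forall z, P z ->
  [\/ z \in M, p z \in M | (z \in Fr M B) && (p z \in Fr M B)].
Definition InvT (M B : {set T}) x := forall z, P z ->
  [\/ z \in M, p z \in M, (z \in Fr M B) && (p z \in Fr M B) |
      ((z == x) && (p z \in Fr M B)) || ((p z == x) && (z \in Fr M B))].
Definition Win (M : {set T}) := forall S : {set T}, M \subset S ->
  (forall z, P z -> (z \in S) || (p z \in S)) -> W S.

Lemma Win_mon (M M' : {set T}) : M \subset M' -> Win M -> Win M'.
Proof. move=> s w S sS; apply: w; exact: subset_trans sS. Qed.

Lemma InvT_win (M B : {set T}) x : Fr M B = set0 -> InvT M B x -> Win M -> W M.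
Proof.
move=> F0 I w; apply: w => // z Pz; case: (I z Pz) => [->//|->|h|h]; rewrite ?orbT //;
  by move: h; rewrite F0 ?inE ?andbF.
Qed.

Lemma Inv_InvT (M B : {set T}) x : Inv M B -> InvT M B x.
Proof. by move=> I z Pz; case: (I z Pz) => h; [apply: Or41|apply: Or42|apply: Or43]. Qed.

Lemma FrU1 y (M B : {set T}) : y \in Fr M B -> #|Fr (y |: M) B| = (#|Fr M B|).-1.
Proof.
move=> yF; rewrite (cardsD1 y (Fr M B)) yF /=; apply: eq_card => z.
rewrite /Fr !inE; by case: (z == y).
Qed.

Lemma FrU1r y (M B : {set T}) : y \in Fr M B -> #|Fr M (y |: B)| = (#|Fr M B|).-1.
Proof.
move=> yF; rewrite (cardsD1 y (Fr M B)) yF /=; apply: eq_card => z.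
rewrite /Fr !inE; by case: (z == y); rewrite ?orbT.
Qed.

Lemma maker_step f :
  (forall M B, #|Fr M B| <= f.-1 -> Inv M B -> Win M -> maker_wins W f.-1 false M B) ->
  forall M B x, #|Fr M B| <= f -> InvT M B x -> Win M -> maker_wins W f true M B.
Proof.
move=> IH M B x hc I w.
have [F0|Fn] := eqVneq (Fr M B) set0.
  have WM := InvT_win F0 I w.
  by case: f IH hc => [|f] IH hc //=; rewrite -/(Fr M B) F0 eqxx.
case: f IH hc => [|f] IH hc.
  by move: Fn; rewrite -cards_eq0; case: #|_| hc.
rewrite /= -/(Fr M B) (negbTE Fn).
pose y := if P x && (p x \in Fr M B) then p x else odflt x [pick z in Fr M B].
have yF : y \in Fr M B.
  rewrite /y; case: ifP => [/andP[]//|_].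
  by case: pickP => [z ->//|e]; move: Fn; case: (set0Pn (Fr M B)) => // [[z]]; rewrite e.
apply/existsP; exists y; rewrite yF /=.
apply: IH => /=.
- by rewrite FrU1 //; move: hc; case: #|_|.
- move=> z Pz.
  have [Pz' ppz pzz] := Pp Pz.
  case: (I z Pz) => [zM|pzM|/andP[zF pzF]|/orP[/andP[/eqP zx pzF]|/andP[/eqP pzx zF]]].
  + by apply: Or31; rewrite inE zM orbT.
  + by apply: Or32; rewrite inE pzM orbT.
  + have [zy|zy] := eqVneq z y; first by apply: Or31; rewrite zy setU11.
    have [pzy|pzy] := eqVneq (p z) y; first by apply: Or32; rewrite pzy setU11.
    by apply: Or33; move: zF pzF; rewrite /Fr !inE (negbTE zy) (negbTE pzy) /= => -> ->.
  + by apply: Or32; rewrite /y -zx Pz pzF setU11.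
  + have Px : P x by rewrite -pzx.
    have xz : p x = z by rewrite -pzx ppz.
    by apply: Or31; rewrite /y Px xz zF setU11.
- apply: Win_mon w; exact: subsetUr.
Qed.

Lemma Inv_win (M B : {set T}) : Fr M B = set0 -> Inv M B -> Win M -> W M.
Proof.
move=> F0 I w; apply: w => // z Pz; case: (I z Pz) => [->//|->|h]; rewrite ?orbT //;
  by move: h; rewrite F0 ?inE ?andbF.
Qed.

Lemma both_lemma f :
  (forall M B, #|Fr M B| <= f -> Inv M B -> Win M -> maker_wins W f false M B) /\
  (forall M B x, #|Fr M B| <= f -> InvT M B x -> Win M -> maker_wins W f true M B).
Proof.
elim: f => [|f [IHb IHm]].
  split.
    move=> M B hc I w.
    by apply: (Inv_win _ I w); apply/eqP; rewrite -cards_eq0; case: #|_| hc.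
  move=> M B x hc I w.
  by apply: (InvT_win _ I w); apply/eqP; rewrite -cards_eq0; case: #|_| hc.
split; last first.
  exact: (maker_step (f := f.+1) IHb).
move=> M B hc I w.
rewrite /= -/(Fr M B).
have [F0|Fn] := eqVneq (Fr M B) set0; first exact: (Inv_win F0 I w).
apply/forall_inP => x xF.
apply: (IHm M (x |: B) x _ _ w).
  by rewrite FrU1r //; move: hc; case: #|_|.
move=> z Pz; have [Pz' ppz pzz] := Pp Pz.
case: (I z Pz) => [zM|pzM|/andP[zF pzF]]; first by apply: Or41.
  by apply: Or42.
have [zx|zx] := eqVneq z x.
  apply: Or44; rewrite zx ?eqxx /=; move: pzF; rewrite /Fr !inE -zx.
  by rewrite (negbTE pzz) /= ?orbF => ->.
have [pzx|pzx] := eqVneq (p z) x.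
  apply: Or44; rewrite pzx ?eqxx /= ?orbT; move: zF; rewrite /Fr !inE -pzx.
  by rewrite eq_sym (negbTE pzz) /= => ->.
apply: Or43; move: zF pzF; rewrite /Fr !inE (negbTE zx) (negbTE pzx) /= => h1 h2.
by rewrite h1 h2.
Qed.

Lemma breaker_lemma f M B : #|Fr M B| <= f -> Inv M B -> Win M ->
  maker_wins W f false M B.
Proof. exact: (proj1 (both_lemma f)). Qed.

Lemma maker_first f (M B : {set T}) : #|Fr M B| <= f -> Inv M B -> Win M ->
  maker_wins W f true M B.
Proof.
move=> hc I w.
have [F0|/set0Pn [x xF]] := eqVneq (Fr M B) set0.
  have WM := Inv_win F0 I w.
  have F0' : ~: (M :|: B) = set0 := F0.
  by case: f hc => [|f] hc //=; rewrite F0' eqxx.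
apply: (maker_step (f := f) _ hc (Inv_InvT x I) w).
move=> *; exact: breaker_lemma.
Qed.

Lemma size_bound f : forall mturn (M B : {set T}), maker_wins W f mturn M B ->
  exists S : {set T}, W S /\ #|S| <= #|M| + (if mturn then f.+1 %/ 2 else f %/ 2).
Proof.
elim: f => [|f IH] mturn M B /=.
  by move=> h; exists M; split => //; rewrite leq_addr.
case: ifP => [_ h|Fn]; first by exists M; split => //; rewrite leq_addr.
case: mturn.
  case/exists_inP => x _ /IH [S [WS hS]]; exists S; split => //.
  apply: (leq_trans hS); rewrite cardsU1.
  by case: (x \notin M) => /=; lia.
have [x xF] : exists x, x \in ~: (M :|: B) by apply/set0Pn; rewrite Fn.
move/forall_inP/(_ x xF)/IH => [S [WS hS]]; exists S; split => //.
Qed.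
End Game.

Lemma maker_move (T : finType) (W : {set T} -> bool) f (M B : {set T}) x :
  x \in Fr M B -> maker_wins W f false (x |: M) B -> maker_wins W f.+1 true M B.
Proof.
move=> xF h /=; rewrite -/(Fr M B).
have -> : (Fr M B == set0) = false by apply/negbTE/set0Pn; exists x.
by apply/exists_inP; exists x.
Qed.

Section Dist.
Variable T : finType.
Variable e : rel T.

Lemma ball_S m x : ball e m.+1 x = ball e m x :|: [set y | [exists z in ball e m x, e z y]].
Proof. by []. Qed.

Lemma ball_mono m m' x : m <= m' -> ball e m x \subset ball e m' x.
Proof.
elim: m' => [|m' IH]; first by rewrite leqn0 => /eqP ->.
rewrite leq_eqVlt => /orP[/eqP->//|h].
apply: subset_trans (IH h) _; rewrite ball_S; exact: subsetUl.
Qed.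

Lemma dist_le k m x z : m <= k -> m < #|T| ->
  (dist_k e k x z <= m) = (z \in ball e m x).
Proof.
move=> mk mT; rewrite /dist_k /gdist geq_min.
rewrite (_ : k.+1 <= m = false) ?orbF; last by apply/negbTE; rewrite -ltnNge ltnS.
set s := iota 0 #|T|.
apply/idP/idP => h.
  have hs : has (fun m => z \in ball e m x) s.
    by rewrite has_find size_iota; apply: leq_ltn_trans h mT.
  have := nth_find 0 hs; rewrite nth_iota; last by apply: leq_ltn_trans h mT.
  rewrite add0n => hb; exact: (subsetP (ball_mono x h)).
rewrite leqNgt; apply/negP => lt.
by have := before_find 0 lt; rewrite nth_iota // add0n h.
Qed.

Lemma dist_neq k m x y z : m <= k -> m < #|T| ->
  z \in ball e m x -> z \notin ball e m y -> dist_k e k x z != dist_k e k y z.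
Proof.
move=> mk mT; rewrite -!(@dist_le k m) // => h1 h2; apply/eqP => E.
by rewrite -E h1 in h2.
Qed.

Lemma ball0 x z : (z \in ball e 0 x) = (z == x).
Proof. by rewrite inE. Qed.

Lemma ball1 x z : (z \in ball e 1 x) = (z == x) || e x z.
Proof.
rewrite ball_S !inE; congr (_ || _).
apply/exists_inP/idP => [[w]|h]; last by exists x => //; rewrite /= inE.
by rewrite inE => /eqP ->.
Qed.

Lemma ball2 x z : (z \in ball e 2 x) = (z \in ball e 1 x) || [exists w in ball e 1 x, e w z].
Proof. rewrite [ball e 2 x]ball_S in_setU in_set. by []. Qed.

End Dist.

Definition adjb n (a b : nat) :=
  [|| a.+1 == b, b.+1 == a, (a.+1 == n) && (b == 0) | (b.+1 == n) && (a == 0)].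

Lemma succ_mod n a b : a < n -> b < n ->
  (a.+1 %% n == b) = (a.+1 == b) || (a.+1 == n) && (b == 0).
Proof.
move=> ha hb; have [h|h] := ltnP a.+1 n.
  rewrite modn_small // (_ : (a.+1 == n) = false) ?orbF //; apply/eqP; lia.
have e : a.+1 = n by lia.
rewrite e modnn eqxx /= (_ : (n == b) = false) //; apply/eqP; lia.
Qed.

Section Cyc.
Variable n : nat.
Notation e := (@cycle_rel n).
Implicit Types x y z w : 'I_n.

Lemma cyc_adj x y : e x y = adjb n x y.
Proof.
rewrite /cycle_rel !succ_mod // /adjb.
by do !case: (_ == _).
Qed.

Lemma b1 x z : (z \in ball e 1 x) = (val z == val x) || adjb n x z.
Proof. by rewrite ball1 cyc_adj. Qed.

Lemma b2in x z w : (val w == val x) || adjb n x w -> adjb n w z -> z \in ball e 2 x.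
Proof.
move=> h1 h2; rewrite ball2; apply/orP; right; apply/exists_inP; exists w.
  by rewrite b1.
by rewrite cyc_adj.
Qed.

Lemma b2out x z : ~~ ((val z == val x) || adjb n x z) ->
  (forall w, (val w == val x) || adjb n x w -> ~~ adjb n w z) -> z \notin ball e 2 x.
Proof.
move=> h1 h2; rewrite ball2 b1 negb_or h1 /=; apply/exists_inP => [[w]].
rewrite b1 cyc_adj => /h2; by move/negP.
Qed.

Lemma odd_pos (a : nat) : odd a -> 0 < a.
Proof. by case: a. Qed.

Definition pv (x : nat) := if odd x then x.-1 else x.+1.
Definition Pc x := pv x < n.
Definition pp x : 'I_n := insubd x (pv x).

Lemma pp_val x : Pc x -> val (pp x) = pv x.
Proof. by move=> h; rewrite val_insubd ifT. Qed.

Lemma pv_adj x : Pc x -> adjb n x (pp x).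
Proof.
move=> h; rewrite pp_val // /pv /adjb; case: ifP => o; last lia.
have := odd_pos o; lia.
Qed.

Lemma pv_inv (a : nat) : pv (pv a) = a.
Proof.
case: a => [|b] //; rewrite /pv /=; case ob: (odd b) => /=; by rewrite ?ob.
Qed.

Lemma pv_neq (a : nat) : pv a != a.
Proof. rewrite /pv; case: ifP => o; have := @odd_pos a; rewrite o; lia. Qed.

Lemma pp_prop x : Pc x -> [/\ Pc (pp x), pp (pp x) = x & pp x != x].
Proof.
move=> h.
have hv := pp_val h.
have h2 : Pc (pp x) by rewrite /Pc hv pv_inv.
split => //.
  by apply: val_inj; rewrite pp_val // hv pv_inv.
by rewrite -val_eqE hv pv_neq.
Qed.


Definition Gd (S : {set 'I_n}) x y := exists2 z, z \in S &
  ((z \in ball e 1 x) != (z \in ball e 1 y)) ||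
  (odd n && ((z \in ball e 2 x) != (z \in ball e 2 y))).

Lemma Gd_sym (S : {set 'I_n}) x y : Gd S x y -> Gd S y x.
Proof.
by case=> z zS h; exists z => //; rewrite eq_sym (eq_sym (_ \in ball e 2 y)).
Qed.

Lemma neqTF (a b : bool) : a -> ~~ b -> a != b.
Proof. by case: a; case: b. Qed.
Lemma neqFT (a b : bool) : ~~ a -> b -> a != b.
Proof. by case: a; case: b. Qed.

Lemma half (S : {set 'I_n}) x y : x != y -> y \notin S -> x \notin S -> Pc x ->
  (pp x \in S) -> Gd S x y \/ adjb n y (pp x).
Proof.
move=> xy yS xS Px pS.
case h: (pp x \in ball e 1 y); last first.
  left; exists (pp x) => //; apply/orP; left; rewrite h.
  by rewrite b1 pv_adj // orbT.
right; move: h; rewrite b1 => /orP [/eqP h|//].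
have : pp x = y by apply: val_inj.
by move=> E; rewrite -E pS in yS.
Qed.

Lemma both (S : {set 'I_n}) x y : 5 <= n -> x != y -> y \notin S -> x \notin S -> Pc x -> Pc y ->
  (pp x \in S) -> (pp y \in S) -> Gd S x y.
Proof.
move=> n5 xy yS xS Px Py pxS pyS.
have [//|a1] := half xy yS xS Px pxS.
have yx : y != x by rewrite eq_sym.
have [/Gd_sym //|a2] := half yx xS yS Py pyS.
have a3 := pv_adj Px; have a4 := pv_adj Py.
have pxy : val (pp x) != val (pp y).
  apply/negP => /eqP /val_inj E.
  have [_ ex _] := pp_prop Px; have [_ ey _] := pp_prop Py.
  by move: xy; rewrite -ex E ey eqxx.
have := ltn_ord x; have := ltn_ord y; have := ltn_ord (pp x); have := ltn_ord (pp y).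
rewrite -val_eqE /= in xy pxy.
exfalso; move: a1 a2 a3 a4 pxy xy; rewrite /adjb.
move: (nat_of_ord x) (nat_of_ord y) (nat_of_ord (pp x)) (nat_of_ord (pp y)) => a b c d.
lia.
Qed.


Lemma unp (S : {set 'I_n}) x y : 5 <= n -> x != y -> y \notin S -> x \notin S ->
  Pc x -> ~~ Pc y -> (forall z, Pc z -> (z \in S) || (pp z \in S)) -> Gd S x y.
Proof.
move=> n5 xy yS xS Px Py hit.
have pxS : pp x \in S by move: (hit x Px); rewrite (negbTE xS).
have lx := ltn_ord x; have ly := ltn_ord y; have lpx := ltn_ord (pp x).
have [ey on] : (nat_of_ord y).+1 = n /\ odd n.
  move: Py; rewrite /Pc /pv; case oy: (odd y) => h.
    by exfalso; lia.
  have ey : (nat_of_ord y).+1 = n by lia.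
  by split => //; rewrite -ey /= oy.
have [//|a1] := half xy yS xS Px pxS.
have vx := pp_val Px.
rewrite -val_eqE /= in xy.
have xv : (nat_of_ord x = 1 /\ nat_of_ord (pp x) = 0) \/
          ((nat_of_ord x) + 3 = n /\ (nat_of_ord (pp x)).+2 = n).
  move: vx a1; rewrite /pv /adjb /=; case: ifP => ox vx a1.
    by have := odd_pos ox; lia.
  lia.
case: xv => [[x1 px0]|[x3 px2]].
  have h2 : 2 < n by lia.
  pose o2 := Ordinal h2.
  have P2 : Pc o2 by rewrite /Pc /pv /=; lia.
  have v3 : nat_of_ord (pp o2) = 3 by rewrite (pp_val P2).
  case/orP: (hit o2 P2) => [o2S|p2S].
    exists o2 => //; apply/orP; left; apply: neqTF; rewrite b1 /adjb /=; lia.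
  have [n5e|n5n] := eqVneq n 5.
    exists (pp o2) => //; apply/orP; left; apply: neqFT; rewrite b1 /adjb /=; lia.
  exists (pp o2) => //; apply/orP; right; rewrite on /=; apply: neqTF.
    by apply: (b2in (w := o2)); rewrite /adjb /=; lia.
  apply: b2out; first by rewrite /adjb /=; lia.
  move=> w; have := ltn_ord w; rewrite /adjb /=; lia.
have h0 : 0 < n by lia.
pose o0 := Ordinal h0.
have P0 : Pc o0 by rewrite /Pc /pv /=; lia.
have v1 : nat_of_ord (pp o0) = 1 by rewrite (pp_val P0).
case/orP: (hit o0 P0) => [o0S|p0S].
  exists o0 => //; apply/orP; left; apply: neqFT; rewrite b1 /adjb /=; lia.
have [n5e|n5n] := eqVneq n 5.
  exists (pp o0) => //; apply/orP; left; apply: neqTF; rewrite b1 /adjb /=; lia.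
exists (pp o0) => //; apply/orP; right; rewrite on /=; apply: neqFT.
  apply: b2out; first by rewrite /adjb /=; lia.
  move=> w; have := ltn_ord w; rewrite /adjb /=; lia.
by apply: (b2in (w := o0)); rewrite /adjb /=; lia.
Qed.

End Cyc.

Lemma dist_neq' (T : finType) (e : rel T) k m x y z : m <= k -> m < #|T| ->
  (z \in ball e m x) != (z \in ball e m y) -> dist_k e k x z != dist_k e k y z.
Proof.
move=> mk mT; case hx: (z \in ball e m x); case hy: (z \in ball e m y) => // _.
  by apply: (dist_neq mk mT); rewrite ?hx ?hy.
by rewrite eq_sym; apply: (dist_neq mk mT); rewrite ?hx ?hy.
Qed.

Lemma outcome_M (T : finType) (W : {set T} -> bool) (P : pred T) (p : T -> T) :
  (forall x : T, P x -> [/\ P (p x), p (p x) = x & p x != x]) ->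
  Win W P p set0 -> game_outcome W = Out_M.
Proof.
move=> Pp w.
have hc : #|Fr (T:=T) set0 set0| <= #|T| by rewrite /Fr setU0 setC0 cardsT.
have I : Inv P p set0 set0.
  by move=> z Pz; apply: Or33; rewrite /Fr setU0 setC0 !inE.
by rewrite /game_outcome /maker_wins_first /maker_wins_second
  (maker_first Pp hc I w) (breaker_lemma Pp hc I w).
Qed.

Section Big.
Variable n : nat.
Notation e := (@cycle_rel n).

Lemma notPc (x : 'I_n) : ~~ Pc x -> (nat_of_ord x).+1 = n.
Proof.
have lx := ltn_ord x.
rewrite /Pc /pv; case: ifP => o h; first by exfalso; lia.
lia.
Qed.

Lemma res_big k (S : {set 'I_n}) : 5 <= n -> 1 <= k -> (odd n -> 2 <= k) ->
  (forall z, Pc z -> (z \in S) || (pp z \in S)) -> resolving_k e k S.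
Proof.
move=> n5 k1 k2 hit; apply/forallP => x; apply/forallP => y; apply/implyP => xy.
case xS: (x \in S).
  apply/exists_inP; exists x => //; apply: (dist_neq' (m := 0)) => //.
    by rewrite card_ord; lia.
  by rewrite !ball0 eqxx eq_sym; case: (x == y) xy.
case yS: (y \in S).
  apply/exists_inP; exists y => //; apply: (dist_neq' (m := 0)) => //.
    by rewrite card_ord; lia.
  by rewrite !ball0 eqxx (eq_sym y x); case: (x == y) xy.
suff [z zS /orP [h|/andP [o h]]] : Gd S x y.
    apply/exists_inP; exists z => //; apply: (dist_neq' (m := 1)) h => //.
    by rewrite card_ord; lia.
  apply/exists_inP; exists z => //; apply: (dist_neq' (m := 2)) h => //.
    exact: k2.
  by rewrite card_ord; lia.
have hp : forall u, Pc u -> u \notin S -> pp u \in S.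
  by move=> u Pu uS; move: (hit u Pu); rewrite (negbTE uS).
move/negbT: xS => xS; move/negbT: yS => yS.
case Px: (Pc x); case Py: (Pc y).
- exact: both n5 xy yS xS Px Py (hp _ Px xS) (hp _ Py yS).
- by apply: unp n5 xy yS xS Px _ hit; rewrite Py.
- have yx : y != x by rewrite eq_sym.
  by apply: Gd_sym; apply: unp n5 yx xS yS Py _ hit; rewrite Px.
- have := notPc (negbT Px); have := notPc (negbT Py).
  by rewrite -val_eqE /= in xy; lia.
Qed.

Lemma Pp_big : forall x : 'I_n, Pc x -> [/\ Pc (pp x), pp (pp x) = x & pp x != x].
Proof. exact: pp_prop. Qed.

Lemma big_M k : 5 <= n -> 1 <= k -> (odd n -> 2 <= k) -> O_Rk e k = Out_M.
Proof.
move=> n5 k1 k2; apply: (outcome_M Pp_big) => S _ hit.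
exact: res_big.
Qed.
End Big.

Lemma dist1 n k (x z : 'I_n) : 1 <= k -> 1 < n -> x != z -> adjb n x z ->
  dist_k (@cycle_rel n) k x z = 1.
Proof.
move=> k1 n1 xz a.
have c1 : 1 < #|'I_n| by rewrite card_ord.
have c0 : 0 < #|'I_n| by rewrite card_ord; lia.
have A := @dist_le _ (@cycle_rel n) k 1 x z k1 c1.
have B := @dist_le _ (@cycle_rel n) k 0 x z (leq0n _) c0.
rewrite b1 a orbT ball0 eq_sym (negbTE xz) in A B.
move/idP: A => A; move/negbT: B => B; lia.
Qed.

Definition p4 (x : 'I_4) : 'I_4 := insubd x (if x < 2 then x + 2 else x - 2).

Lemma p4v (x : 'I_4) : val (p4 x) = if x < 2 then x + 2 else x - 2.
Proof.
have l := ltn_ord x; rewrite val_insubd ifT //; case: ifP => h; lia.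
Qed.

Lemma Pp4 : forall x : 'I_4, predT x -> [/\ predT (p4 x), p4 (p4 x) = x & p4 x != x].
Proof.
move=> x _; have l := ltn_ord x; have v1 := p4v x; have v2 := p4v (p4 x).
split => //.
  apply: val_inj; move: v1 v2 => /=; case: ifP => a; case: ifP => b; lia.
rewrite -val_eqE; move: v1 => /=; case: ifP => a; lia.
Qed.

Lemma four_M k : 1 <= k -> O_Rk (@cycle_rel 4) k = Out_M.
Proof.
move=> k1; apply: (outcome_M Pp4) => S _ hit.
apply/forallP => x; apply/forallP => y; apply/implyP => xy.
case xS: (x \in S).
  apply/exists_inP; exists x => //; apply: (dist_neq' (m := 0)); rewrite ?card_ord //.
  by rewrite !ball0 eqxx eq_sym; case: (x == y) xy.
case yS: (y \in S).
  apply/exists_inP; exists y => //; apply: (dist_neq' (m := 0)); rewrite ?card_ord //.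
  by rewrite !ball0 eqxx (eq_sym y x); case: (x == y) xy.
have pS : p4 x \in S by move: (hit x isT); rewrite xS.
have ypx : val y != val (p4 x).
  by apply/negP => /eqP /val_inj E; rewrite E pS in yS.
apply/exists_inP; exists (p4 x) => //; apply: (dist_neq' (m := 1)); rewrite ?card_ord //.
apply: neqFT; rewrite !b1 /adjb; rewrite -val_eqE /= in xy ypx;
  have := ltn_ord x; have := ltn_ord y; have v := p4v x; move: v ypx => /=;
  case: ifP => a; lia.
Qed.

Definition p3 (x : 'I_3) : 'I_3 := insubd x (3 - x).
Definition P3 (x : 'I_3) : bool := 0 < x.

Lemma p3v (x : 'I_3) : P3 x -> val (p3 x) = 3 - x.
Proof. rewrite /P3 => h; rewrite val_insubd ifT //; lia. Qed.

Lemma Pp3 : forall x : 'I_3, P3 x -> [/\ P3 (p3 x), p3 (p3 x) = x & p3 x != x].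
Proof.
move=> x h; have l := ltn_ord x; have v1 := p3v h.
have h2 : P3 (p3 x) by rewrite /P3 v1; lia.
have v2 := p3v h2.
split => //.
  by apply: val_inj; rewrite v2 v1 /=; lia.
rewrite -val_eqE v1 /=; lia.
Qed.

Lemma res3 k (S : {set 'I_3}) : 1 <= k -> ord0 \in S ->
  (forall z, P3 z -> (z \in S) || (p3 z \in S)) -> resolving_k (@cycle_rel 3) k S.
Proof.
move=> k1 S0 hit.
apply/forallP => x; apply/forallP => y; apply/implyP => xy.
case xS: (x \in S).
  apply/exists_inP; exists x => //; apply: (dist_neq' (m := 0)); rewrite ?card_ord //.
  by rewrite !ball0 eqxx eq_sym; case: (x == y) xy.
case yS: (y \in S).
  apply/exists_inP; exists y => //; apply: (dist_neq' (m := 0)); rewrite ?card_ord //.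
  by rewrite !ball0 eqxx (eq_sym y x); case: (x == y) xy.
exfalso.
have nz : forall u : 'I_3, u \in S = false -> P3 u.
  move=> u uS; rewrite /P3 lt0n; apply/negP => /eqP u0.
  have : u = ord0 by apply: val_inj.
  by move=> E; rewrite E S0 in uS.
have Px := nz x xS; have Py := nz y yS.
have pS : p3 x \in S by move: (hit x Px); rewrite xS.
have ypx : val y != val (p3 x).
  by apply/negP => /eqP /val_inj E; rewrite E pS in yS.
have v := p3v Px.
rewrite -val_eqE /= in xy; rewrite /= in ypx v; move: Px Py; rewrite /P3 => Px Py.
have := ltn_ord x; have := ltn_ord y; lia.
Qed.

Lemma nonres3 k (S : {set 'I_3}) : 1 <= k -> #|S| <= 1 -> ~~ resolving_k (@cycle_rel 3) k S.
Proof.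
move=> k1 hS; apply/negP => /forallP R.
have [a Sa] : exists a, S \subset [set a].
  move: hS; rewrite leq_eqVlt ltnS leqn0 => /orP [/cards1P [a ->]|/eqP /cards0_eq ->].
    by exists a.
  by exists ord0; rewrite sub0set.
have la := ltn_ord a.
have h1 : (a + 1) %% 3 < 3 by rewrite ltn_pmod.
have h2 : (a + 2) %% 3 < 3 by rewrite ltn_pmod.
pose x := Ordinal h1; pose y := Ordinal h2.
have xy : x != y.
  by rewrite -val_eqE /=; case: (nat_of_ord a) la => [|[|[|m]]].
move: (R x) => /forallP /(_ y) /implyP /(_ xy) /exists_inP [z zS].
have za : z = a by apply/set1P; exact: (subsetP Sa).
have ax : a != x by rewrite -val_eqE /=; case: (nat_of_ord a) la => [|[|[|m]]].
have ay : a != y by rewrite -val_eqE /=; case: (nat_of_ord a) la => [|[|[|m]]].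
rewrite za (@dist1 3 k x a) // ?(@dist1 3 k y a) // 1?eq_sym //.
- by rewrite /adjb /=; case: (nat_of_ord a) la => [|[|[|m]]].
- by rewrite /adjb /=; case: (nat_of_ord a) la => [|[|[|m]]].
Qed.

Lemma three_N k : 1 <= k -> O_Rk (@cycle_rel 3) k = Out_N.
Proof.
move=> k1; rewrite /O_Rk /game_outcome.
have -> : maker_wins_first (resolving_k (@cycle_rel 3) k) = true.
  rewrite /maker_wins_first card_ord.
  apply: (@maker_move _ _ _ set0 set0 ord0); first by rewrite /Fr !inE.
  apply: (breaker_lemma Pp3).
  - by rewrite /Fr setU0 cardsCs setCK card_ord setU0 cards1.
  - move=> z Pz; apply: Or33.
    have v := p3v Pz; move: Pz; rewrite /P3 => Pz.
    rewrite /Fr !inE -!val_eqE /= in v *; have := ltn_ord z; lia.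
  - move=> S sS hit; apply: res3 => //.
    by apply: (subsetP sS); rewrite !inE.
have -> : maker_wins_second (resolving_k (@cycle_rel 3) k) = false.
  apply/negP; rewrite /maker_wins_second => /size_bound [S [WS hS]].
  rewrite cards0 card_ord add0n in hS.
  by move: WS; apply/negP; apply: nonres3.
by [].
Qed.

Theorem proposition3p5 (k n : nat) : 0 < k -> 3 <= n ->
  [/\ n = 3 -> O_Rk (@cycle_rel n) k = Out_N,
      (4 <= n) && ~~ odd n -> O_Rk (@cycle_rel n) k = Out_M
    & (5 <= n) && odd n && (2 <= k) -> O_Rk (@cycle_rel n) k = Out_M].
Proof.
move=> k1 n3; split.
- by move=> E; subst n; exact: three_N.
- move=> /andP [n4 ev]; have [E|ne] := eqVneq n 4.
    by subst n; exact: four_M.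
  apply: big_M => //; first lia.
  by rewrite (negbTE ev).
- by move=> /andP [/andP [n5 o] k2]; apply: big_M.
Qed.
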